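(* For any congruences $R$ and $S$ on the same quandle $X$, $c_X(R\vee S)=c_X(R)\vee c_X(S)$, where $\vee$ denotes the join in the lattice of congruences on $X$.
   Context: A quandle is a set $X$ with two binary operations $\lhd,\lhd^{-1}$ satisfying, for all $x,y,z\in X$: $x\lhd x = x = x\lhd^{-1}x$; $(x\lhd y)\lhd^{-1}y = x = (x\lhd^{-1}y)\lhd y$; $(x\lhd y)\lhd z = (x\lhd z)\lhd(y\lhd z)$ and $(x\lhd^{-1}y)\lhd^{-1}z = (x\lhd^{-1}z)\lhd^{-1}(y\lhd^{-1}z)$. Homomorphisms preserve both operations. A congruence on $X$ is an equivalence relation on $X$ that is a subquandle of $X\times X$. For $x\in X$, the orbit $[x]_X$ is the set of all elements $x\lhd^{\alpha_1}x_1\cdots\lhd^{\alpha_n}x_n$ ($n\ge 0$, $x_i\in X$, $\lhd^{\alpha_i}\in\{\lhd,\lhd^{-1}\}$, bracketed from the left). The effective closure of a congruence $R$ on $X$ (associated with the reflection of quandles onto trivial quandles) is $c_X(R)=\{(x,y)\in X\times X\mid [q(x)]_{X/R}=[q(y)]_{X/R}\}$ where $q\colon X\to X/R$ is the canonical quotient. *)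

(* Defs.v *)
(* quandles may be infinite, so we work with plain types and Prop relations. *)
From Stdlib Require Import FunctionalExtensionality PropExtensionality.

Set Implicit Arguments.

Record quandle := Quandle {
  qcar :> Type;
  qop : qcar -> qcar -> qcar;
  qopi : qcar -> qcar -> qcar;
  q_idem : forall x, qop x x = x;
  q_idemi : forall x, qopi x x = x;
  q_right_inv1 : forall x y, qopi (qop x y) y = x;
  q_right_inv2 : forall x y, qop (qopi x y) y = x;
  q_dist : forall x y z, qop (qop x y) z = qop (qop x z) (qop y z);
  q_disti : forall x y z, qopi (qopi x y) z = qopi (qopi x z) (qopi y z)
}.

Inductive orbit (T : Type) (op opi : T -> T -> T) (x : T) : T -> Prop :=
  | orb_refl : orbit op opi x x
  | orb_op : forall y z, orbit op opi x y -> orbit op opi x (op y z)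
  | orb_opi : forall y z, orbit op opi x y -> orbit op opi x (opi y z).

Definition is_congruence (X : quandle) (R : X -> X -> Prop) : Prop :=
  (forall x, R x x) /\
  (forall x y, R x y -> R y x) /\
  (forall x y z, R x y -> R y z -> R x z) /\
  (forall x y x' y', R x y -> R x' y' -> R (qop X x x') (qop X y y')) /\
  (forall x y x' y', R x y -> R x' y' -> R (qopi X x x') (qopi X y y')).

Arguments is_congruence {X} R.

Record congruence (X : quandle) := Congruence {
  crel :> X -> X -> Prop;
  crel_cong : is_congruence crel
}.

Arguments crel {X} _ _ _.
Arguments crel_cong {X} _.
Arguments Congruence {X} crel crel_cong.

Definition rjoin (X : quandle) (R S : X -> X -> Prop) : X -> X -> Prop :=
  fun x y => forall T : X -> X -> Prop, is_congruence T ->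
    (forall a b, R a b -> T a b) -> (forall a b, S a b -> T a b) -> T x y.

Arguments rjoin {X} R S _ _.

Lemma rjoin_cong (X : quandle) (R S : X -> X -> Prop) : is_congruence (rjoin R S).
Proof.
  unfold rjoin; repeat split.
  - intros x T [H _] _ _; apply H.
  - intros x y H T HT HR HS. pose proof HT as (_ & Hs & _). apply Hs, H; auto.
  - intros x y z H1 H2 T HT HR HS. pose proof HT as (_ & _ & Ht & _).
    apply Ht with y; [apply H1|apply H2]; auto.
  - intros x y x' y' H1 H2 T HT HR HS. pose proof HT as (_ & _ & _ & Ho & _).
    apply Ho; [apply H1|apply H2]; auto.
  - intros x y x' y' H1 H2 T HT HR HS. pose proof HT as (_ & _ & _ & _ & Ho).
    apply Ho; [apply H1|apply H2]; auto.
Qed.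

Definition cjoin (X : quandle) (R S : congruence X) : congruence X :=
  @Congruence X (rjoin R S) (@rjoin_cong X R S).

(** The quotient X/R: carrier = equivalence classes R x (as predicates). *)
Section Quotient.
Variables (X : quandle) (R : congruence X).

Definition qclass := { C : X -> Prop | exists x, C = crel R x }.

Definition qproj (x : X) : qclass := exist _ (crel R x) (ex_intro _ x eq_refl).

Lemma class_op_eq (op : X -> X -> X)
  (Hop : forall x y x' y', R x y -> R x' y' -> R (op x x') (op y y')) (x y : X) :
  (fun z => exists a b, R x a /\ R y b /\ R (op a b) z) = crel R (op x y).
Proof.
  destruct (crel_cong R) as (Hr & Hs & Ht & _).
  apply functional_extensionality; intro z; apply propositional_extensionality; split.
  - intros (a & b & Ha & Hb & Hz). eapply Ht; [apply Hop; eassumption|exact Hz].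
  - intros Hz. exists x, y. auto.
Qed.

Definition qlift (op : X -> X -> X)
  (Hop : forall x y x' y', R x y -> R x' y' -> R (op x x') (op y y'))
  (C D : qclass) : qclass.
Proof.
  refine (exist _ (fun z => exists a b, proj1_sig C a /\ proj1_sig D b /\ R (op a b) z) _).
  destruct C as [C [x ->]], D as [D [y ->]]; simpl.
  exists (op x y). apply class_op_eq; exact Hop.
Defined.

Definition quot_op : qclass -> qclass -> qclass :=
  @qlift (qop X) (proj1 (proj2 (proj2 (proj2 (crel_cong R))))).
Definition quot_opi : qclass -> qclass -> qclass :=
  @qlift (qopi X) (proj2 (proj2 (proj2 (proj2 (crel_cong R))))).

End Quotient.

(** Effective closure: c_X(R) = {(x,y) | [q(x)]_{X/R} = [q(y)]_{X/R}}. *)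
Definition eff_closure (X : quandle) (R : congruence X) : X -> X -> Prop :=
  fun x y => orbit (@quot_op X R) (@quot_opi X R) (@qproj X R x)
           = orbit (@quot_op X R) (@quot_opi X R) (@qproj X R y).

Arguments eff_closure {X} R _ _.

(* Main.v *)
Require Import Defs.
From Stdlib Require Import FunctionalExtensionality PropExtensionality ProofIrrelevance.

Section Aux.
Variables (X : quandle) (T : congruence X).

Lemma sig_eq' (C D : qclass T) : proj1_sig C = proj1_sig D -> C = D.
Proof. destruct C as [P p], D as [Q q]; simpl; intros ->; f_equal; apply proof_irrelevance. Qed.

Lemma qproj_eq a b : T a b -> qproj T a = qproj T b.
Proof.
  destruct (crel_cong T) as (Hr & Hs & Ht & _).
  intro H; apply sig_eq'; simpl.
  apply functional_extensionality; intro z; apply propositional_extensionality; split; intro H1.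
  - apply Ht with a; auto.
  - apply Ht with b; auto.
Qed.

Lemma qproj_inv a b : qproj T a = qproj T b -> T a b.
Proof.
  destruct (crel_cong T) as (Hr & Hs & Ht & _).
  intro H. assert (E := f_equal (@proj1_sig _ _) H). simpl in E.
  assert (Hb : T b b) by apply Hr. rewrite <- E in Hb. exact Hb.
Qed.

Lemma every_class (C : qclass T) : exists v, C = qproj T v.
Proof. destruct C as [P [v Hv]]; exists v; apply sig_eq'; simpl; auto. Qed.

Lemma qop_proj a b : @quot_op X T (qproj T a) (qproj T b) = qproj T (qop X a b).
Proof. apply sig_eq'; simpl. apply class_op_eq; apply (crel_cong T). Qed.

Lemma qopi_proj a b : @quot_opi X T (qproj T a) (qproj T b) = qproj T (qopi X a b).
Proof. apply sig_eq'; simpl. apply class_op_eq; apply (crel_cong T). Qed.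

Lemma orbit_trans x y z : orbit (qop X) (qopi X) x y -> orbit (qop X) (qopi X) y z ->
  orbit (qop X) (qopi X) x z.
Proof. intros H1 H2; induction H2; [exact H1| apply orb_op | apply orb_opi]; auto. Qed.

Lemma orbit_sym x y : orbit (qop X) (qopi X) x y -> orbit (qop X) (qopi X) y x.
Proof.
  intro H; induction H.
  - constructor.
  - apply orbit_trans with y; auto.
    rewrite <- (q_right_inv1 X y z) at 2. apply orb_opi; constructor.
  - apply orbit_trans with y; auto.
    rewrite <- (q_right_inv2 X y z) at 2. apply orb_op; constructor.
Qed.

Definition E x y := exists z, orbit (qop X) (qopi X) x z /\ T z y.

Lemma push y u : orbit (qop X) (qopi X) y u -> forall z, T z y ->
  exists z', orbit (qop X) (qopi X) z z' /\ T z' u.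
Proof.
  destruct (crel_cong T) as (Hr & Hs & Ht & Ho & Hoi).
  intro H; induction H; intros w Hw.
  - exists w; split; [constructor|auto].
  - destruct (IHorbit w Hw) as (z' & H1 & H2). exists (qop X z' z); split.
    + apply orb_op; auto.
    + apply Ho; auto.
  - destruct (IHorbit w Hw) as (z' & H1 & H2). exists (qopi X z' z); split.
    + apply orb_opi; auto.
    + apply Hoi; auto.
Qed.

Lemma E_sym x y : E x y -> E y x.
Proof.
  destruct (crel_cong T) as (Hr & Hs & Ht & _).
  intros (z & H1 & H2). apply orbit_sym in H1.
  destruct (@push z x H1 y (Hs _ _ H2)) as (z' & H3 & H4). exists z'; auto.
Qed.

Lemma E_trans x y w : E x y -> E y w -> E x w.
Proof.
  destruct (crel_cong T) as (Hr & Hs & Ht & _).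
  intros (z & H1 & H2) (u & H3 & H4).
  destruct (@push y u H3 z H2) as (z' & H5 & H6). exists z'; split.
  - apply orbit_trans with z; auto.
  - apply Ht with u; auto.
Qed.

Lemma E_orb x y : orbit (qop X) (qopi X) x y -> E x y.
Proof. destruct (crel_cong T) as (Hr & _). intro H; exists y; auto. Qed.

Lemma E_cong : is_congruence E.
Proof.
  destruct (crel_cong T) as (Hr & Hs & Ht & _).
  assert (Ho : forall x y, E x y -> forall x' y',
     orbit (qop X) (qopi X) x x' -> orbit (qop X) (qopi X) y y' -> E x' y').
  { intros x y H x' y' H1 H2. apply E_trans with x.
    - apply E_orb, orbit_sym, H1.
    - apply E_trans with y; auto. apply E_orb; auto. }
  repeat split.
  - intro x; apply E_orb; constructor.
  - apply E_sym.
  - apply E_trans.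
  - intros x y x' y' H _. apply (Ho x y H); apply orb_op; constructor.
  - intros x y x' y' H _. apply (Ho x y H); apply orb_opi; constructor.
Qed.

Lemma orbitC x C : orbit (@quot_op X T) (@quot_opi X T) (qproj T x) C ->
  exists z, orbit (qop X) (qopi X) x z /\ C = qproj T z.
Proof.
  intro H; induction H.
  - exists x; split; [constructor|auto].
  - destruct IHorbit as (w & H1 & ->). destruct (every_class z) as [v ->].
    exists (qop X w v); split; [apply orb_op; auto| apply qop_proj].
  - destruct IHorbit as (w & H1 & ->). destruct (every_class z) as [v ->].
    exists (qopi X w v); split; [apply orb_opi; auto| apply qopi_proj].
Qed.

Lemma orbitX x z : orbit (qop X) (qopi X) x z ->
  orbit (@quot_op X T) (@quot_opi X T) (qproj T x) (qproj T z).
Proof.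
  intro H; induction H.
  - constructor.
  - rewrite <- qop_proj. apply orb_op; auto.
  - rewrite <- qopi_proj. apply orb_opi; auto.
Qed.

Lemma effE : eff_closure T = E.
Proof.
  destruct (crel_cong T) as (Hr & Hs & Ht & _).
  apply functional_extensionality; intro x; apply functional_extensionality; intro y.
  apply propositional_extensionality; split.
  - intro H. unfold eff_closure in H.
    assert (Hy : orbit (@quot_op X T) (@quot_opi X T) (qproj T y) (qproj T y)) by constructor.
    rewrite <- H in Hy. destruct (@orbitC x _ Hy) as (z & H1 & H2).
    exists z; split; auto. apply Hs, qproj_inv; auto.
  - assert (K : forall x y, E x y -> forall C,
      orbit (@quot_op X T) (@quot_opi X T) (qproj T x) C ->
      orbit (@quot_op X T) (@quot_opi X T) (qproj T y) C).
    { intros a b Hab C HC. destruct (@orbitC a _ HC) as (w & H1 & ->).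
      assert (Hbw : E b w) by (apply E_trans with a; [apply E_sym; auto| apply E_orb; auto]).
      destruct Hbw as (w' & H2 & H3). rewrite <- (@qproj_eq _ _ H3). apply orbitX; auto. }
    intro H. unfold eff_closure.
    apply functional_extensionality; intro C; apply propositional_extensionality; split.
    + apply K; auto.
    + apply K, E_sym; auto.
Qed.

End Aux.

Theorem mainTheorem12 (X : quandle) (R S : congruence X) :
  eff_closure (cjoin R S) = rjoin (eff_closure R) (eff_closure S).
Proof.
  rewrite !effE.
  apply functional_extensionality; intro x; apply functional_extensionality; intro y.
  apply propositional_extensionality; split.
  - intros (z & H1 & H2) J HJ HR HS.
    destruct HJ as (Jr & Js & Jt & Jrest) eqn:HJ'.
    apply Jt with z.
    + apply HR. apply (@E_orb X R); auto.
    + apply H2; auto.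
      * intros a b Hab. apply HR. exists a; split; [constructor|auto].
      * intros a b Hab. apply HS. exists a; split; [constructor|auto].
  - intro H. apply H.
    + apply (@E_cong X (cjoin R S)).
    + intros a b (z & H1 & H2). exists z; split; auto.
      simpl. intros T HT HR HS. auto.
    + intros a b (z & H1 & H2). exists z; split; auto.
      simpl. intros T HT HR HS. auto.
Qed.
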